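(* Consider on $M_h$ with $2h=1$ the reduced cylindrical integrable system $(\ell_{12},\ell_{34})$. Its bifurcation diagram (set of critical values of $(\ell_{12},\ell_{34}):M_h\to\mathbb R^2$) is composed of the four straight lines $\ell_{34}=\pm(1\pm\ell_{12})$, which intersect transversally at $(\pm1,0)$ and $(0,\pm1)$.
   Context: $\mathbf L=(\ell_{12},\ell_{13},\ell_{14},\ell_{23},\ell_{24},\ell_{34})\in\mathbb R^6\cong\mathfrak{so}(4)^*$ with the Lie–Poisson bracket of $\mathfrak{so}(4)$ (extending $\ell_{ji}=-\ell_{ij}$: $\{\ell_{ij},\ell_{jk}\}=-\ell_{ik}$ for distinct $i,j,k$, and $\{\ell_{ij},\ell_{kl}\}=0$ when $\{i,j\}\cap\{k,l\}=\emptyset$). $M_h=\{\mathbf L:\sum_{i<j}\ell_{ij}^2=2h,\ \ell_{12}\ell_{34}-\ell_{13}\ell_{24}+\ell_{14}\ell_{23}=0\}\cong S^2\times S^2$ is a symplectic leaf. *)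

(* Defs.v *)
From Stdlib Require Import Reals.
Open Scope R_scope.

(* A point L = (l12,l13,l14,l23,l24,l34) of so(4)^* ~ R^6. *)
Record so4 := mkso4 { l12 : R; l13 : R; l14 : R; l23 : R; l24 : R; l34 : R }.

Definition cas1 (L : so4) : R :=
  l12 L ^ 2 + l13 L ^ 2 + l14 L ^ 2 + l23 L ^ 2 + l24 L ^ 2 + l34 L ^ 2.
Definition cas2 (L : so4) : R :=
  l12 L * l34 L - l13 L * l24 L + l14 L * l23 L.

Definition in_Mh (h : R) (L : so4) : Prop := cas1 L = 2 * h /\ cas2 L = 0.

Definition dcas1 (L v : so4) : R :=
  2 * (l12 L * l12 v + l13 L * l13 v + l14 L * l14 v
       + l23 L * l23 v + l24 L * l24 v + l34 L * l34 v).
Definition dcas2 (L v : so4) : R :=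
  l12 v * l34 L + l12 L * l34 v - l13 v * l24 L - l13 L * l24 v
  + l14 v * l23 L + l14 L * l23 v.

(* Tangent space of M_h at L (M_h is a regular level set of (cas1,cas2)
   for h > 0). *)
Definition tangent (L v : so4) : Prop := dcas1 L v = 0 /\ dcas2 L v = 0.

(* The map F = (l12, l34) : M_h -> R^2.  Its differential restricted to
   T_L M_h is v |-> (l12 v, l34 v) (F is linear). *)
Definition F_regular_point (L : so4) : Prop :=
  (exists v, tangent L v /\ l12 v = 1 /\ l34 v = 0) /\
  (exists w, tangent L w /\ l12 w = 0 /\ l34 w = 1).

Definition F_critical_point (h : R) (L : so4) : Prop :=
  in_Mh h L /\ ~ F_regular_point L.

Definition bifurcation_diagram (h : R) (x y : R) : Prop :=
  exists L, F_critical_point h L /\ l12 L = x /\ l34 L = y.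

Definition F_image (h : R) (x y : R) : Prop :=
  exists L, in_Mh h L /\ l12 L = x /\ l34 L = y.

Definition four_lines (x y : R) : Prop :=
  y = 1 + x \/ y = - (1 + x) \/ y = 1 - x \/ y = - (1 - x).

(* Main.v *)
Require Import Defs.
From Stdlib Require Import Reals Lra Psatz Classical.
Open Scope R_scope.

Lemma sq_id_u (L : so4) :
  (l12 L + l34 L)^2 + (l13 L - l24 L)^2 + (l14 L + l23 L)^2 = cas1 L + 2 * cas2 L.
Proof. unfold cas1, cas2; ring. Qed.
Lemma sq_id_w (L : so4) :
  (l12 L - l34 L)^2 + (l13 L + l24 L)^2 + (l14 L - l23 L)^2 = cas1 L - 2 * cas2 L.
Proof. unfold cas1, cas2; ring. Qed.

Lemma tan_u (L v : so4) :
  (l12 L + l34 L) * (l12 v + l34 v) + (l13 L - l24 L) * (l13 v - l24 v)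
  + (l14 L + l23 L) * (l14 v + l23 v) = dcas1 L v / 2 + dcas2 L v.
Proof. unfold dcas1, dcas2; field. Qed.
Lemma tan_w (L v : so4) :
  (l12 L - l34 L) * (l12 v - l34 v) + (l13 L + l24 L) * (l13 v + l24 v)
  + (l14 L - l23 L) * (l14 v - l23 v) = dcas1 L v / 2 - dcas2 L v.
Proof. unfold dcas1, dcas2; field. Qed.

Lemma regular_of (L : so4) :
  in_Mh (1/2) L ->
  (l12 L + l34 L)^2 <> 1 -> (l12 L - l34 L)^2 <> 1 ->
  forall p q, exists v, tangent L v /\ l12 v = p /\ l34 v = q.
Proof.
  intros [H1 H2] Hu Hw p q.
  pose proof (sq_id_u L) as Su. pose proof (sq_id_w L) as Sw.
  rewrite H1, H2 in Su, Sw.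
  set (u1 := l12 L + l34 L) in *; set (u2 := l13 L - l24 L) in *; set (u3 := l14 L + l23 L) in *.
  set (w1 := l12 L - l34 L) in *; set (w2 := l13 L + l24 L) in *; set (w3 := l14 L - l23 L) in *.
  set (s := u2^2 + u3^2). set (t := w2^2 + w3^2).
  assert (Hs : s <> 0) by (unfold s; intro; apply Hu; lra).
  assert (Ht : t <> 0) by (unfold t; intro; apply Hw; lra).
  set (A := p + q). set (B := p - q).
  set (du2 := - A * u1 * u2 / s). set (du3 := - A * u1 * u3 / s).
  set (dw2 := - B * w1 * w2 / t). set (dw3 := - B * w1 * w3 / t).
  exists (mkso4 ((A+B)/2) ((du2+dw2)/2) ((du3+dw3)/2) ((du3-dw3)/2) ((dw2-du2)/2) ((A-B)/2)).
  assert (Eu : u1 * A + u2 * du2 + u3 * du3 = 0).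
  { unfold du2, du3. field_simplify_eq; [|exact Hs]. unfold s. ring. }
  assert (Ew : w1 * B + w2 * dw2 + w3 * dw3 = 0).
  { unfold dw2, dw3. field_simplify_eq; [|exact Ht]. unfold t. ring. }
  pose proof (tan_u L (mkso4 ((A+B)/2) ((du2+dw2)/2) ((du3+dw3)/2) ((du3-dw3)/2) ((dw2-du2)/2) ((A-B)/2))) as Tu.
  pose proof (tan_w L (mkso4 ((A+B)/2) ((du2+dw2)/2) ((du3+dw3)/2) ((du3-dw3)/2) ((dw2-du2)/2) ((A-B)/2))) as Tw.
  simpl in Tu, Tw. fold u1 u2 u3 w1 w2 w3 in Tu, Tw.
  replace ((A + B) / 2 + (A - B) / 2) with A in Tu by field.
  replace ((du2 + dw2) / 2 - (dw2 - du2) / 2) with du2 in Tu by field.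
  replace ((du3 + dw3) / 2 + (du3 - dw3) / 2) with du3 in Tu by field.
  replace ((A + B) / 2 - (A - B) / 2) with B in Tw by field.
  replace ((du2 + dw2) / 2 + (dw2 - du2) / 2) with dw2 in Tw by field.
  replace ((du3 + dw3) / 2 - (du3 - dw3) / 2) with dw3 in Tw by field.
  unfold tangent. simpl. split; [split|].
  - lra.
  - lra.
  - unfold A, B; split; field.
Qed.

Lemma critical_of (L : so4) :
  in_Mh (1/2) L -> four_lines (l12 L) (l34 L) -> F_critical_point (1/2) L.
Proof.
  intros HM Hl. split; [exact HM|].
  destruct HM as [H1 H2].
  pose proof (sq_id_u L) as Su. pose proof (sq_id_w L) as Sw.
  rewrite H1, H2 in Su, Sw.
  intros [[v [[Tv1 Tv2] [V1 V2]]] _].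
  pose proof (tan_u L v) as Tu. pose proof (tan_w L v) as Tw.
  rewrite Tv1, Tv2, V1, V2 in *.
  unfold four_lines in Hl.
  destruct Hl as [E|[E|[E|E]]].
  - assert (E' : l12 L - l34 L = -1) by lra. rewrite E' in Sw, Tw.
    assert (Z : (l13 L + l24 L)^2 + (l14 L - l23 L)^2 = 0) by (simpl in Sw |- *; lra). pose proof (pow2_ge_0 (l13 L + l24 L)). pose proof (pow2_ge_0 (l14 L - l23 L)).
    assert (a : l13 L + l24 L = 0) by (assert (HH : (l13 L + l24 L) * (l13 L + l24 L) = 0) by (simpl in *; lra); destruct (Rmult_integral _ _ HH); assumption). assert (b : l14 L - l23 L = 0) by (assert (HH : (l14 L - l23 L) * (l14 L - l23 L) = 0) by (simpl in *; lra); destruct (Rmult_integral _ _ HH); assumption).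
    rewrite a, b in Tw. lra.
  - assert (E' : l12 L + l34 L = -1) by lra. rewrite E' in Su, Tu.
    assert (Z : (l13 L - l24 L)^2 + (l14 L + l23 L)^2 = 0) by (simpl in Su |- *; lra). pose proof (pow2_ge_0 (l13 L - l24 L)). pose proof (pow2_ge_0 (l14 L + l23 L)).
    assert (a : l13 L - l24 L = 0) by (assert (HH : (l13 L - l24 L) * (l13 L - l24 L) = 0) by (simpl in *; lra); destruct (Rmult_integral _ _ HH); assumption). assert (b : l14 L + l23 L = 0) by (assert (HH : (l14 L + l23 L) * (l14 L + l23 L) = 0) by (simpl in *; lra); destruct (Rmult_integral _ _ HH); assumption).
    rewrite a, b in Tu. lra.
  - assert (E' : l12 L + l34 L = 1) by lra. rewrite E' in Su, Tu.
    assert (Z : (l13 L - l24 L)^2 + (l14 L + l23 L)^2 = 0) by (simpl in Su |- *; lra). pose proof (pow2_ge_0 (l13 L - l24 L)). pose proof (pow2_ge_0 (l14 L + l23 L)).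
    assert (a : l13 L - l24 L = 0) by (assert (HH : (l13 L - l24 L) * (l13 L - l24 L) = 0) by (simpl in *; lra); destruct (Rmult_integral _ _ HH); assumption). assert (b : l14 L + l23 L = 0) by (assert (HH : (l14 L + l23 L) * (l14 L + l23 L) = 0) by (simpl in *; lra); destruct (Rmult_integral _ _ HH); assumption).
    rewrite a, b in Tu. lra.
  - assert (E' : l12 L - l34 L = 1) by lra. rewrite E' in Sw, Tw.
    assert (Z : (l13 L + l24 L)^2 + (l14 L - l23 L)^2 = 0) by (simpl in Sw |- *; lra). pose proof (pow2_ge_0 (l13 L + l24 L)). pose proof (pow2_ge_0 (l14 L - l23 L)).
    assert (a : l13 L + l24 L = 0) by (assert (HH : (l13 L + l24 L) * (l13 L + l24 L) = 0) by (simpl in *; lra); destruct (Rmult_integral _ _ HH); assumption). assert (b : l14 L - l23 L = 0) by (assert (HH : (l14 L - l23 L) * (l14 L - l23 L) = 0) by (simpl in *; lra); destruct (Rmult_integral _ _ HH); assumption).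
    rewrite a, b in Tw. lra.
Qed.

Lemma iff_part (x y : R) :
  bifurcation_diagram (1/2) x y <-> (F_image (1/2) x y /\ four_lines x y).
Proof.
  split.
  - intros [L [[HM HR] [Ex Ey]]]. split.
    + exists L; auto.
    + destruct (classic (four_lines x y)) as [H|H]; [exact H|].
      exfalso. apply HR. subst x y.
      unfold four_lines in H.
      assert (Hu : (l12 L + l34 L)^2 <> 1).
      { intro E. apply H. assert ((l12 L + l34 L - 1) * (l12 L + l34 L + 1) = 0) by nra.
        destruct (Rmult_integral _ _ H0); [left|right; left]; lra. }
      assert (Hw : (l12 L - l34 L)^2 <> 1).
      { intro E. apply H. assert ((l12 L - l34 L - 1) * (l12 L - l34 L + 1) = 0) by nra.
        destruct (Rmult_integral _ _ H0); [right; right; right|right; right; left]; lra. }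
      split; [apply regular_of; auto | apply regular_of; auto].
  - intros [[L [HM [Ex Ey]]] Hl]. subst x y.
    exists L. split; [apply critical_of; auto | auto].
Qed.

Theorem proposition8 :
  (* 2h = 1 *)
  let h := 1 / 2 in
  (* the bifurcation diagram is made of (the parts inside the image of F)
     of the four lines l34 = +-(1 +- l12) *)
  (forall x y : R,
     bifurcation_diagram h x y <-> (F_image h x y /\ four_lines x y)) /\
  (* the pairwise intersection points (+-1,0), (0,+-1) belong to it *)
  bifurcation_diagram h 1 0 /\ bifurcation_diagram h (-1) 0 /\
  bifurcation_diagram h 0 1 /\ bifurcation_diagram h 0 (-1).
Proof.
  intro h. unfold h.
  assert (P : forall a b c d e f, in_Mh (1/2) (mkso4 a b c d e f) ->
            four_lines a f -> bifurcation_diagram (1/2) a f).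
  { intros. apply iff_part. split; auto. exists (mkso4 a b c d e f); simpl; auto. }
  split; [exact iff_part|].
  repeat split; (apply (P _ 0 0 0 0 _); [unfold in_Mh, cas1, cas2; simpl; split; field|unfold four_lines; lra]).
Qed.
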